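(* Let $\alpha=(\alpha_1,\ldots,\alpha_n)$ be a composition, and suppose there is $1\le r\le n-1$ with $\alpha_r<\alpha_{r+1}$. Let $w\in S_n$ be a permutation in which the value $r$ appears before the value $r+1$. Let $\alpha'=\alpha\cdot s_r$ (i.e. $\alpha$ with $\alpha_r$ and $\alpha_{r+1}$ interchanged). Then $x_\alpha(w)=x_{\alpha'}(w)$.
   Context: A composition is a sequence of $n$ nonnegative integers. The skyline diagram $D(\gamma)$ of a composition $\gamma$ is the set of boxes $(i,j)$ (row $i$, column $j$, rows numbered top to bottom) with $1\le j\le\gamma_i$. For $w=w_1\cdots w_n\in S_n$, the filling $\mathcal{F}_w(D(\gamma))$ is defined column by column: for each column $j$, for $k=1,\ldots,n$ in turn, place $w_k$ into the topmost still-empty box of column $j$ of $D(\gamma)$ whose row index is $\ge w_k$, skipping $w_k$ if no such box exists. Then $x_\gamma(w)=(x_1,\ldots,x_n)$, where $x_k$ is the number of appearances of $k$ in $\mathcal{F}_w(D(\gamma))$. *)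

(* Defs.v *)
From mathcomp Require Import all_boot all_fingroup.
Set Implicit Arguments. Unset Strict Implicit. Unset Printing Implicit Defensive.

(* Conventions: a composition gamma = (gamma_1,...,gamma_n) is a seq nat of
   size n, with gamma_i = nth 0 gamma (i-1).  Rows and values are numbered
   1..n (1-based, as in the paper).  A permutation w : 'S_n is read in
   one-line notation w_1 ... w_n with w_k = (w (k-1)).+1. *)

Definition word n (w : 'S_n) : seq nat := [seq (w i).+1 | i <- enum 'I_n].

(* Filling of one column.  [avail] = rows of the column still empty, listed
   top to bottom (increasing). *)
Fixpoint fill_col (avail : seq nat) (vals : seq nat) : seq nat :=
  match vals with
  | [::] => [::]
  | v :: vs =>
      match [seq r <- avail | v <= r] with
      | [::] => fill_col avail vs
      | r :: _ => v :: fill_col (rem r avail) vs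
      end
  end.

Definition col_rows (gamma : seq nat) (j : nat) : seq nat :=
  [seq i <- iota 1 (size gamma) | j <= nth 0 gamma i.-1].

(* all entries of F_w(D(gamma)) (columns 1 .. max gamma), as a multiset *)
Definition filling (gamma : seq nat) (wd : seq nat) : seq nat :=
  flatten [seq fill_col (col_rows gamma j) wd
          | j <- iota 1 (foldr maxn 0 gamma)].

Definition xvec (gamma : seq nat) (wd : seq nat) : seq nat :=
  [seq count_mem k (filling gamma wd) | k <- iota 1 (size gamma)].

Definition swap_adj (alpha : seq nat) (r : nat) : seq nat :=
  [seq nth 0 alpha (if i == r.-1 then r else if i == r then r.-1 else i)
  | i <- iota 0 (size alpha)].

(* Main.v *)
Require Import Defs.
From mathcomp Require Import all_boot all_fingroup zify.

Definition fr (r x : nat) := if x == r then r.+1 else x.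

Lemma map_rem_in (f : nat -> nat) x s :
  {in x :: s &, injective f} -> map f (rem x s) = rem (f x) (map f s).
Proof.
elim: s => [|y s IH] Hi //=.
case: (eqVneq y x) => [->|nyx]; first by rewrite eqxx.
have -> : (f y == f x) = false.
  apply/negbTE/eqP => /Hi E; move: nyx; rewrite E ?eqxx //.
  - by rewrite !inE eqxx orbT.
  - by rewrite !inE eqxx.
rewrite /= IH //; apply: sub_in2 Hi => z; rewrite !inE; by case/orP => ->; rewrite ?orbT.
Qed.

Lemma rem_cat_mid (x : nat) s1 s2 : x \notin s1 -> rem x (s1 ++ x :: s2) = s1 ++ s2.
Proof.
elim: s1 => [|y s1 IH] /=; first by rewrite eqxx.
rewrite inE negb_or => /andP[ny nx]; rewrite eq_sym (negbTE ny) IH //.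
Qed.

Lemma filter_nil_lt (r : nat) a1 : all (fun y => y < r) a1 -> [seq x <- a1 | r <= x] = [::].
Proof. by elim: a1 => //= y a1 IHa /andP[hy ha]; rewrite leqNgt hy /= IHa. Qed.

Lemma fill_swap r vals : forall avail, sorted ltn avail -> r.+1 \notin avail ->
  index r vals < index r.+1 vals ->
  fill_col avail vals = fill_col (map (fr r) avail) vals.
Proof.
elim: vals => [|v vs IH] avail Hs Hn Hi //.
case: (boolP (r \in avail)) => Hr; last first.
  rewrite (_ : map (fr r) avail = avail) //.
  apply: map_id_in => x Hx; rewrite /fr.
  by case: eqP => // Exr; subst; rewrite Hx in Hr.
move: Hi; rewrite /= -/(index r vs) -/(index r.+1 vs).
case: (eqVneq v r.+1) => [->|nv1]; first by rewrite ltn0.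
case: (eqVneq v r) => [Evr|nvr] Hi.
  subst v.
  case/splitPr: Hr Hs Hn => a1 a2 Hs Hn.
  move: (Hs); rewrite sorted_cat_cons => /andP[H1 H2].
  have A1 : all (fun y => y < r) a1.
    move: H1; rewrite -rev_sorted rev_rcons /=.
    move/(order_path_min (fun a b c h1 h2 => ltn_trans h2 h1)).
    by rewrite all_rev.
  have A2 : all (fun y => r < y) a2 := order_path_min ltn_trans H2.
  have E1 : map (fr r) a1 = a1.
    apply: map_id_in => x Hx; rewrite /fr; have := allP A1 x Hx.
    by case: eqP => // ->; rewrite ltnn.
  have E2 : map (fr r) a2 = a2.
    apply: map_id_in => x Hx; rewrite /fr; have := allP A2 x Hx.
    by case: eqP => // ->; rewrite ltnn.
  have Er : fr r r = r.+1 by rewrite /fr eqxx.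
  rewrite map_cat /= E1 E2 Er !filter_cat (@filter_nil_lt r a1 A1) /= leqnn ltnW //.
  rewrite !rem_cat_mid //.
    apply/negP => /(allP A1); by rewrite ltnNge leqnSn.
  apply/negP => /(allP A1); by rewrite ltnn.
have Hsi : {in avail &, injective (fr r)}.
  move=> a b Ha Hb; rewrite /fr.
  case: eqP => [->|na]; case: eqP => [->|nb] // E.
  - by move: Hb; rewrite -E (negbTE Hn).
  - by move: Ha; rewrite E (negbTE Hn).
have Hf : [seq x <- map (fr r) avail | v <= x] = map (fr r) [seq x <- avail | v <= x].
  rewrite filter_map; congr map; apply: eq_in_filter => x _ /=; rewrite /fr.
  case: eqP => // ->; move: nv1 => /eqP nv1.
  apply/idP/idP => h; last exact: leqW.
  by move: h; rewrite leq_eqVlt ltnS => /orP[/eqP//|].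
rewrite Hf.
have Hi' : index r vs < index r.+1 vs by move: Hi.
case E: [seq x <- avail | v <= x] => [|x t] /=; first exact: IH.
have Hx : x \in avail by have := mem_head x t; rewrite -E mem_filter => /andP[].
rewrite -map_rem_in; last by apply: sub_in2 Hsi => z; rewrite inE; case/orP => [/eqP->|].
congr cons; apply: IH => //.
  exact: (@subseq_sorted _ ltn ltn_trans _ _ (rem_subseq _ _) Hs).
by apply/negP => /(mem_subseq (rem_subseq _ _)); apply/negP.
Qed.

Definition sig (r i : nat) := if i == r.-1 then r else if i == r then r.-1 else i.

Lemma sig_inv r i : 0 < r -> sig r (sig r i) = i.
Proof. rewrite /sig => hr; do 5?[case: eqP => /=]; lia. Qed.

Lemma sig_lt r n i : 0 < r -> r < n -> i < n -> sig r i < n.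
Proof. rewrite /sig => hr; do 2?[case: eqP => /=]; lia. Qed.

Lemma swap_nth alpha r i : 0 < r -> r < size alpha ->
  nth 0 (swap_adj alpha r) i = nth 0 alpha (sig r i).
Proof.
move=> h0 h1; rewrite /swap_adj.
case: (ltnP i (size alpha)) => hi.
  by rewrite (nth_map 0) ?size_iota // nth_iota.
rewrite !nth_default ?size_map ?size_iota //.
rewrite /sig; do 2?[case: eqP => /=]; lia.
Qed.

Lemma swap_size alpha r : size (swap_adj alpha r) = size alpha.
Proof. by rewrite size_map size_iota. Qed.

Lemma fm_ge s y : y \in s -> y <= foldr maxn 0 s.
Proof.
elim: s => //= z s IH; rewrite inE => /orP[/eqP->|/IH h]; first exact: leq_maxl.
exact: leq_trans h (leq_maxr _ _).
Qed.

Lemma fm_sub s t : {subset s <= t} -> foldr maxn 0 s <= foldr maxn 0 t.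
Proof.
elim: s => //= y s IH sub; rewrite geq_max fm_ge ?sub ?mem_head // IH // => z hz.
by apply: sub; rewrite inE hz orbT.
Qed.

Lemma swap_max alpha r : 0 < r -> r < size alpha ->
  foldr maxn 0 (swap_adj alpha r) = foldr maxn 0 alpha.
Proof.
move=> h0 h1; apply/eqP; rewrite eqn_leq; apply/andP; split; apply: fm_sub => x.
  case/(nthP 0) => i; rewrite swap_size => hi <-.
  by rewrite swap_nth // mem_nth // sig_lt.
case/(nthP 0) => i hi <-.
rewrite -(@sig_inv r i h0) -swap_nth // mem_nth // swap_size sig_lt //.
Qed.

Lemma col_eq alpha r j wd : 1 <= r <= (size alpha).-1 ->
  nth 0 alpha r.-1 < nth 0 alpha r ->
  index r wd < index r.+1 wd ->
  fill_col (col_rows alpha j) wd = fill_col (col_rows (swap_adj alpha r) j) wd.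
Proof.
move=> /andP[h0 h1] hlt hw.
have h1' : r < size alpha by lia.
set n := size alpha in h1 h1'.
rewrite /col_rows swap_size -/n.
have Hsplit : iota 1 n = iota 1 r.-1 ++ [:: r; r.+1] ++ iota r.+2 (n - r.+1).
  rewrite -[in LHS](_ : r.-1 + (2 + (n - r.+1)) = n); last lia.
rewrite !iotaD; have -> : 1 + r.-1 = r by lia.
  by have -> : r + 2 = r.+2 by lia.
rewrite Hsplit !filter_cat.
set L := [seq i <- iota 1 r.-1 | _].
set R := [seq i <- iota r.+2 (n - r.+1) | _].
have EL : [seq i <- iota 1 r.-1 | j <= nth 0 (swap_adj alpha r) i.-1] = L.
  apply: eq_in_filter => i; rewrite mem_iota => hi.
  rewrite swap_nth // /sig; do 2?[case: eqP => /=]; lia.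
have ER : [seq i <- iota r.+2 (n - r.+1) | j <= nth 0 (swap_adj alpha r) i.-1] = R.
  apply: eq_in_filter => i; rewrite mem_iota => hi.
  rewrite swap_nth // /sig; do 2?[case: eqP => /=]; lia.
rewrite EL ER /= !swap_nth // /sig eqxx /=.
have -> : (r == r.-1) = false by apply/eqP; lia.
rewrite eqxx.
case: (leqP j (nth 0 alpha r.-1)) => hA.
  by rewrite (leq_trans hA (ltnW hlt)).
case: (leqP j (nth 0 alpha r)) => hB //.
have Hs : sorted ltn (L ++ r :: R).
  have := @sorted_filter _ ltn ltn_trans (fun i => j <= nth 0 (swap_adj alpha r) i.-1) _ (iota_ltn_sorted 1 n).
  by rewrite Hsplit !filter_cat EL ER /= !swap_nth // /sig eqxx /= (_ : (r == r.-1) = false) ?eqxx ?hB ?(leqNgt j) ?hA //; apply/eqP; lia.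
have HL : forall x, x \in L -> x < r by move=> x; rewrite mem_filter mem_iota => /andP[_]; lia.
have HR : forall x, x \in R -> r.+1 < x by move=> x; rewrite mem_filter mem_iota => /andP[_]; lia.
rewrite (@fill_swap r wd (L ++ r :: R) Hs).
- rewrite map_cat /= /fr eqxx; congr (fill_col (_ ++ _ :: _) wd).
    apply/esym/map_id_in => x /HL hx; case: eqP => //; lia.
  apply/esym/map_id_in => x /HR hx; case: eqP => //; lia.
- rewrite mem_cat inE negb_or; apply/andP; split.
    by apply/negP => /HL; lia.
  by rewrite negb_or; apply/andP; split; [apply/eqP; lia | apply/negP => /HR; lia].
- exact: hw.
Qed.

Theorem proposition4p5 (alpha : seq nat) (w : 'S_(size alpha)) (r : nat) :
  1 <= r <= (size alpha).-1 ->
  nth 0 alpha r.-1 < nth 0 alpha r ->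
  index r (word w) < index r.+1 (word w) ->
  xvec alpha (word w) = xvec (swap_adj alpha r) (word w).
Proof.
move=> hr hlt hw.
have h0 : 0 < r by case/andP: hr.
have h1 : r < size alpha by case/andP: hr => _; lia.
rewrite /xvec /filling swap_size swap_max //.
apply: eq_map => k; congr (count_mem k (flatten _)).
by apply: eq_map => j; apply: col_eq.
Qed.
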